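(* Let $n,m\geq 3$ be integers such that at least one of $n,m$ is even. Then $K_n\times K_m$ is type I, i.e. $\chi''(K_n\times K_m)=(n-1)(m-1)+1$.
   Context: All graphs are finite and simple. $K_n$ is the complete graph on $n$ vertices. A total colouring of a graph $G$ is an assignment of colours to the vertices and edges of $G$ such that any two adjacent vertices, any two edges sharing an endpoint, and any edge and each of its endpoints receive different colours. The total chromatic number $\chi''(G)$ is the minimum number of colours in a total colouring of $G$. A graph $G$ with maximum degree $\Delta(G)$ is called type I if $\chi''(G)=\Delta(G)+1$. The direct product $G\times H$ has vertex set $V(G)\times V(H)$, with $(u,v)$ adjacent to $(u',v')$ if and only if $uu'\in E(G)$ and $vv'\in E(H)$; $K_n\times K_m$ is $(n-1)(m-1)$-regular. *)

(* Defs.v *)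
From mathcomp Require Import all_boot.
Set Implicit Arguments. Unset Strict Implicit. Unset Printing Implicit Defensive.

Definition simple_graph (T : finType) (e : rel T) : Prop :=
  (forall x y, e x y = e y x) /\ (forall x, e x x = false).

Definition complete_rel (n : nat) : rel 'I_n := fun i j => i != j.

Definition direct_rel (T U : finType) (eG : rel T) (eH : rel U) : rel (T * U) :=
  fun x y => eG x.1 y.1 && eH x.2 y.2.

Definition KxK (n m : nat) : rel ('I_n * 'I_m) :=
  direct_rel (@complete_rel n) (@complete_rel m).
Arguments KxK n m : clear implicits.

(* A total colouring with colours 'I_k: a vertex colouring cv and an edge
   colouring ce, where the edge {x,y} gets colour ce x y = ce y x. *)
Definition is_total_colouring (T : finType) (e : rel T) (k : nat)
    (cv : T -> 'I_k) (ce : T -> T -> 'I_k) : Prop :=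
  [/\ (forall x y, e x y -> ce x y = ce y x),
      (forall x y, e x y -> cv x != cv y),
      (forall x y z, e x y -> e x z -> y != z -> ce x y != ce x z)
    & (forall x y, e x y -> ce x y != cv x)].

Definition total_colourable (T : finType) (e : rel T) (k : nat) : Prop :=
  exists (cv : T -> 'I_k) (ce : T -> T -> 'I_k), is_total_colouring e cv ce.

Definition is_total_chromatic_number (T : finType) (e : rel T) (k : nat) : Prop :=
  total_colourable e k /\ (forall j, total_colourable e j -> k <= j).

(* Main.v *)
Require Import Defs.
From mathcomp Require Import all_boot zify.
Set Implicit Arguments. Unset Strict Implicit. Unset Printing Implicit Defensive.

Lemma oddE q : odd q -> q = (q./2).*2.+1.
Proof. move=> Hq; rewrite -{1}(odd_double_half q) Hq. lia. Qed.

Lemma modc x q : x < 3 * q ->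
  (x %% q = x /\ x < q) \/ (x %% q = x - q /\ q <= x < 2 * q) \/
  (x %% q = x - 2 * q /\ 2 * q <= x < 3 * q).
Proof.
move=> H.
case: (ltnP x q) => H1; first by left; rewrite modn_small.
case: (ltnP x (2*q)) => H2.
  right; left; split => //.
  have -> : x = (x - q) + q by lia.
  by rewrite modnDr modn_small; lia.
right; right; split => //.
have -> : x = (x - 2 * q) + q + q by lia.
by rewrite !modnDr modn_small; lia.
Qed.

Lemma modc2 x q : x < 2 * q ->
  (x %% q = x /\ x < q) \/ (x %% q = x - q /\ q <= x < 2 * q).
Proof.
move=> H.
case: (ltnP x q) => H1; first by left; rewrite modn_small.
right; split => //.
have -> : x = (x - q) + q by lia.
by rewrite modnDr modn_small; lia.
Qed.

Ltac gen_mod := once (repeat (once match goal with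
 | H : context [?x %% ?q] |- _ =>
   let HH := fresh "HM" in
   (let Hb := fresh in (have Hb : x < 2*q by lia); have HH := modc2 Hb; clear Hb) ||
   (let Hb := fresh in (have Hb : x < 3*q by lia); have HH := modc Hb; clear Hb);
   let r := fresh "r" in let Er := fresh "Er" in remember (x %% q) as r eqn:Er in *; clear Er
 | |- context [?x %% ?q] =>
   let HH := fresh "HM" in
   (let Hb := fresh in (have Hb : x < 2*q by lia); have HH := modc2 Hb; clear Hb) ||
   (let Hb := fresh in (have Hb : x < 3*q by lia); have HH := modc Hb; clear Hb);
   let r := fresh "r" in let Er := fresh "Er" in remember (x %% q) as r eqn:Er in *; clear Er
 end)).


Ltac split_dis := repeat match goal with
  | H : _ \/ _ |- _ => case: H => H
  | H : _ /\ _ |- _ => case: H => ? ?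
  end.

Lemma fact1 n : 2 <= n -> ~~ odd n -> exists F : 'I_n -> 'I_n -> nat,
  [/\ (forall i j, F i j < n.-1), (forall i j, F i j = F j i) &
      (forall i j j', j != i -> j' != i -> F i j = F i j' -> j = j')].
Proof.
move=> Hn Hev.
have Hq : odd n.-1 by move: Hev; case: n Hn => //= n _; rewrite negbK.
have Hq' := oddE Hq.
set q := n.-1 in Hq Hq' *.
have Hqn : n = q.+1 by rewrite /q; lia.
clearbody q.
exists (fun (i j : 'I_n) => if nat_of_ord i == q then (2 * j) %% q else if nat_of_ord j == q then (2 * i) %% q
  else (i + j) %% q).
split.
- move=> i j; have q0 : 0 < q by lia. by case: ifP; [|case: ifP]; rewrite ltn_mod.
- move=> i j.
  have [h1|h1] := eqVneq (nat_of_ord i) q; have [h2|h2] := eqVneq (nat_of_ord j) q.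
  all: rewrite ?h1 ?h2 ?eqxx ?(negPf h1) ?(negPf h2) //.
  by rewrite addnC.
- move=> i j j' hj hj'.
  have {}hj : (j:nat) <> i by move=> E; move/eqP: hj; apply; apply: val_inj.
  have {}hj' : (j':nat) <> i by move=> E; move/eqP: hj'; apply; apply: val_inj.
  have hi := ltn_ord i; have hj1 := ltn_ord j; have hj2 := ltn_ord j'.
  move=> H; apply: val_inj => /=; move: H.
  have [h1|h1] := eqVneq (nat_of_ord i) q; have [h2|h2] := eqVneq (nat_of_ord j) q;
  have [h3|h3] := eqVneq (nat_of_ord j') q;
  rewrite ?h1 ?h2 ?h3 ?eqxx ?(negPf h1) ?(negPf h2) ?(negPf h3) => H; gen_mod; lia.
Qed.

Lemma modsub M a c : a < M -> c < M ->
  (a + M - c) %% M = if c <= a then a - c else a + M - c.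
Proof.
move=> ha hc; case: leqP => h.
  have -> : a + M - c = (a - c) + M by lia.
  rewrite modnDr modn_small; lia.
rewrite modn_small; lia.
Qed.

Lemma dlem1 M a b b' : a < M -> b < M -> b' < M -> a != b -> a != b' -> b != b' ->
  ((b + M - a) %% M).-1 = ((b' + M - a) %% M).-1 -> False.
Proof.
move=> ha hb hb' h1 h2 h3; rewrite !modsub //.
do 2 case: leqP => ?; lia.
Qed.

Lemma dlem2 M a b b' : a < M -> b < M -> b' < M -> a != b -> a != b' -> b != b' ->
  ((a + M - b) %% M).-1 = ((a + M - b') %% M).-1 -> False.
Proof.
move=> ha hb hb' h1 h2 h3; rewrite !modsub //.
do 2 case: leqP => ?; lia.
Qed.

Definition P q c d x y := if x == q then (if y == q then q else (2*y + d) %% q)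
  else if y == q then (2*x + c) %% q else if y == (x + c) %% q then q else (x + y) %% q.

Lemma P_bound q c d x y : 0 < q -> P q c d x y <= q.
Proof.
move=> q0; rewrite /P; do ! case: ifP => _ //; by apply: ltnW; rewrite ltn_mod.
Qed.

Lemma P_row q c d x y y' : odd q -> 0 < c < q -> c + d = q -> x <= q -> y <= q -> y' <= q ->
  P q c d x y = P q c d x y' -> y = y'.
Proof.
move=> /oddE hq hc hd hx hy hy'; rewrite /P.
have [hxq|hxq] := eqVneq x q; rewrite ?hxq ?eqxx ?(negPf hxq).
  case: ifP => h1; case: ifP => h2 H; gen_mod; split_dis; lia.
case: ifP => h1; case: ifP => h2; try case: ifP => h3; try case: ifP => h4;
  move=> H; gen_mod; split_dis; lia.
Qed.

Lemma P_tr q c d x y : 0 < c < q -> c + d = q -> x <= q -> y <= q ->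
  P q c d y x = P q d c x y.
Proof.
move=> hc hd hx hy; rewrite /P.
have [hxq|hxq] := eqVneq x q; rewrite ?hxq ?eqxx ?(negPf hxq);
have [hyq|hyq] := eqVneq y q; rewrite ?hyq ?eqxx ?(negPf hyq) //.
case: ifP => h1; case: ifP => h2 //; try (by rewrite addnC);
  exfalso; gen_mod; split_dis; lia.
Qed.

Lemma P_diag q x x' : odd q -> 3 <= q -> x <= q -> x' <= q ->
  P q 1 q.-1 x x = P q 1 q.-1 x' x' -> x = x'.
Proof.
move=> /oddE hq q3 hx hx'; rewrite /P.
have [hxq|hxq] := eqVneq x q; have [hxq'|hxq'] := eqVneq x' q;
  rewrite ?hxq ?hxq' ?eqxx ?(negPf hxq) ?(negPf hxq') //.
- case: ifP => ? H; gen_mod; split_dis; lia.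
- case: ifP => ? H; gen_mod; split_dis; lia.
- case: ifP => ?; case: ifP => ? H; gen_mod; split_dis; lia.
Qed.
Lemma fact2 m : 3 <= m -> exists L : 'I_m -> 'I_m -> nat,
  [/\ (forall a b, L a b < m), (forall a b b', L a b = L a b' -> b = b'),
      (forall a a' b, L a b = L a' b -> a = a') &
      (forall a a', L a a = L a' a' -> a = a')].
Proof.
move=> Hm.
case Hodd: (odd m).
  have Hq' := oddE Hodd.
  exists (fun (a b : 'I_m) => (a + b) %% m); split.
  - by move=> a b; rewrite ltn_mod; lia.
  - move=> a b b' H; apply: val_inj => /=; have := ltn_ord a; have := ltn_ord b;
    have := ltn_ord b'; move: H => H *; gen_mod; lia.
  - move=> a a' b H; apply: val_inj => /=; have := ltn_ord a; have := ltn_ord b;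
    have := ltn_ord a'; move: H => H *; gen_mod; lia.
  - move=> a a' H; apply: val_inj => /=; have := ltn_ord a;
    have := ltn_ord a'; move: H => H *; gen_mod; lia.
have Hq : odd m.-1 by move: Hodd; case: m Hm => //= m _; case: (odd m).
set q := m.-1 in Hq *.
have Hqn : m = q.+1 by rewrite /q; lia.
clearbody q.
have q3 : 3 <= q.
  case: (ltnP q 2) => h; first lia.
  case E: q Hq h => [|[|[|k]]] //; lia.
have hq1 : 0 < 1 < q by lia.
have hq2 : 0 < q.-1 < q by lia.
have hs1 : 1 + q.-1 = q by lia.
have hs2 : q.-1 + 1 = q by lia.
exists (fun (x y : 'I_m) => P q 1 q.-1 x y); split.
- by move=> a b; have := P_bound 1 q.-1 a b (ltnW (ltnW q3)); lia.
- move=> a b b' H; apply: val_inj.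
  have := ltn_ord a; have := ltn_ord b; have := ltn_ord b' => *.
  apply: (P_row Hq hq1 hs1 _ _ _ H); lia.
- move=> a a' b /= H.
  have := ltn_ord a; have := ltn_ord b; have := ltn_ord a' => *.
  have H2 : P q q.-1 1 b a = P q q.-1 1 b a'.
    rewrite -(@P_tr q 1 q.-1 b a) // -?(@P_tr q 1 q.-1 b a') //; lia.
  by apply: val_inj; apply: (P_row Hq hq2 hs2 _ _ _ H2); lia.
- move=> a a' H; apply: val_inj.
  have := ltn_ord a; have := ltn_ord a' => *.
  apply: (P_diag Hq q3 _ _ H); lia.
Qed.

Lemma inord_eq p u v : u < p.+1 -> v < p.+1 -> (inord u : 'I_p.+1) = inord v -> u = v.
Proof. by move=> hu hv /(congr1 (@nat_of_ord _)); rewrite !inordK. Qed.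

Lemma transport (T D : finType) (e : rel T) (cv : T -> D) (ce : T -> T -> D) k :
  (forall x y, e x y -> ce x y = ce y x) ->
  (forall x y, e x y -> cv x != cv y) ->
  (forall x y z, e x y -> e x z -> y != z -> ce x y != ce x z) ->
  (forall x y, e x y -> ce x y != cv x) ->
  #|D| <= k -> total_colourable e k.
Proof.
move=> h1 h2 h3 h4 hk.
pose f := fun d : D => widen_ord hk (enum_rank d).
have finj : injective f.
  by move=> u v /(congr1 val) /= /val_inj /enum_rank_inj.
exists (fun x => f (cv x)), (fun x y => f (ce x y)); split.
- by move=> x y /h1 ->.
- by move=> x y /h2; rewrite (inj_eq finj).
- by move=> x y z hy hz hyz; rewrite (inj_eq finj); apply: h3.
- by move=> x y /h4; rewrite (inj_eq finj).
Qed.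

Section Cons.
Variables (n2 m2 : nat).
Local Notation N := n2.+3.
Local Notation M := m2.+3.
Variables (F : 'I_N -> 'I_N -> nat) (L : 'I_M -> 'I_M -> nat).
Hypotheses (HF1 : forall i j, F i j < n2.+2) (HF2 : forall i j, F i j = F j i)
  (HF3 : forall i j j', j != i -> j' != i -> F i j = F i j' -> j = j')
  (HL1 : forall a b, L a b < M) (HL2 : forall a b b', L a b = L a b' -> b = b')
  (HL3 : forall a a' b, L a b = L a' b -> a = a')
  (HL4 : forall a a', L a a = L a' a' -> a = a').

Definition pp (x y : 'I_N * 'I_M) : 'I_M := if x.1 < y.1 then x.2 else y.2.
Definition qq (x y : 'I_N * 'I_M) : 'I_M := if x.1 < y.1 then y.2 else x.2.

Definition ceK (x y : 'I_N * 'I_M) : ('I_M + ('I_n2.+1 * 'I_m2.+2))%type :=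
  if F x.1 y.1 == 0 then inl (inord (L (pp x y) (qq x y)))
  else inr (inord (F x.1 y.1).-1, inord (((qq x y : nat) + M - pp x y) %% M).-1).

Definition cvK (x : 'I_N * 'I_M) : ('I_M + ('I_n2.+1 * 'I_m2.+2))%type :=
  inl (inord (L x.2 x.2)).

Lemma consK : total_colourable (KxK N M) (M + n2.+1 * m2.+2).
Proof.
apply: (@transport _ _ _ cvK ceK); last by rewrite card_sum card_prod !card_ord.
- case=> i a [j b]; rewrite /KxK /direct_rel /complete_rel /= => /andP [hij hab].
  rewrite /ceK /pp /qq /= HF2.
  case: (ltngtP i j) => h //.
  by move/eqP: hij => []; apply: val_inj.
- case=> i a [j b]; rewrite /KxK /direct_rel /complete_rel /= => /andP [hij hab].
  rewrite /cvK; apply/eqP => -[] /inord_eq E.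
  by move: hab; rewrite (HL4 (E (HL1 _ _) (HL1 _ _))) eqxx.
- case=> i a [j b] [j' b']; rewrite /KxK /direct_rel /complete_rel /=.
  move=> /andP [hij hab] /andP [hij' hab'] hne.
  apply/negP => /eqP E; rewrite /ceK /pp /qq /= in E.
  have hab0 : (a:nat) != b := hab.
  have hab0' : (a:nat) != b' := hab'.
  have Fb := HF1 i j; have Fb' := HF1 i j'.
  have := ltn_ord a; have := ltn_ord b; have := ltn_ord b' => hb' hb ha.
  case: (eqVneq j j') => hjj.
  - subst j'.
    have hbb : (b:nat) != b'.
      apply/negP => /eqP hb0; move: hne; have -> : b = b' by apply: val_inj.
      by rewrite eqxx.
    case: ifP E => h0 E.
    + case: E => /inord_eq E; have {}E := E (HL1 _ _) (HL1 _ _).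
      case: ifP E => _ E.
        by move: hbb; rewrite (HL2 E) eqxx.
      by move: hbb; rewrite (HL3 E) eqxx.
    + case: E => /inord_eq E.
      have hm : forall x, (x %% M).-1 < m2.+2.
        by move=> x; have := ltn_pmod x (isT : 0 < M); lia.
      have {}E := E (hm _) (hm _).
      move: E; case: ifP => _ E.
        exact: (dlem1 ha hb hb' hab0 hab0' hbb E).
      exact: (dlem2 ha hb hb' hab0 hab0' hbb E).
  - have hF : F i j != F i j'.
      apply/negP => /eqP hF; move: hjj; rewrite (HF3 _ _ hF) ?eqxx //.
        by rewrite eq_sym.
      by rewrite eq_sym.
    have [h0|h0] := eqVneq (F i j) 0; have [h0'|h0'] := eqVneq (F i j') 0;
      rewrite ?h0 ?h0' ?eqxx ?(negPf h0) ?(negPf h0') /= in E => //.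
    + by move: hF; rewrite h0 h0'.
    + case: E => /inord_eq E _.
      have {}E : (F i j).-1 = (F i j').-1 by apply: E; lia.
      by move: hF h0 h0'; have := HF1 i j; have := HF1 i j'; lia.
- case=> i a [j b]; rewrite /KxK /direct_rel /complete_rel /= => /andP [hij hab].
  rewrite /ceK /cvK /pp /qq /=.
  case: ifP => // _; apply/eqP => -[] /inord_eq E.
  have {}E := E (HL1 _ _) (HL1 _ _).
  case: ifP E => _ E.
    by move: hab; rewrite (HL2 E) eqxx.
  by move: hab; rewrite (HL3 E) eqxx.
Qed.
End Cons.

Lemma lower n m j : 0 < n -> 0 < m -> total_colourable (KxK n m) j -> (n-1)*(m-1)+1 <= j.
Proof.
move=> n0 m0 [cv [ce [h1 h2 h3 h4]]].
pose x : 'I_n * 'I_m := (Ordinal n0, Ordinal m0).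
pose N := [set y | KxK n m x y].
have cN : #|N| = (n-1)*(m-1).
  have -> : N = setX [set~ x.1] [set~ x.2].
    apply/setP => y; rewrite !inE /KxK /direct_rel /complete_rel.
    by rewrite (eq_sym y.1) (eq_sym y.2).
  by rewrite cardsX !cardsC1 !card_ord !subn1.
have inj : {in N &, injective (ce x)}.
  move=> y z; rewrite !inE => hy hz E; apply/eqP; apply: contraT => hne.
  by move: (h3 x y z hy hz hne); rewrite E eqxx.
have notin : cv x \notin [set ce x y | y in N].
  apply/imsetP => -[y hy E]; rewrite inE in hy.
  by move: (h4 _ _ hy); rewrite E eqxx.
have := max_card (mem (cv x |: [set ce x y | y in N])).
rewrite cardsU1 notin card_in_imset // cN card_ord; lia.
Qed.

Lemma swapK n m k : total_colourable (KxK n m) k -> total_colourable (KxK m n) k.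
Proof.
move=> [cv [ce [h1 h2 h3 h4]]].
pose sw (x : 'I_m * 'I_n) : 'I_n * 'I_m := (x.2, x.1).
have hsw : forall x y, KxK m n x y = KxK n m (sw x) (sw y).
  by move=> x y; rewrite /KxK /direct_rel /= andbC.
have swinj : injective sw by case=> ? ? [? ?] [-> ->].
exists (fun x => cv (sw x)), (fun x y => ce (sw x) (sw y)); split.
- by move=> x y; rewrite hsw => /h1.
- by move=> x y; rewrite hsw => /h2.
- move=> x y z; rewrite !hsw => hy hz hyz; apply: h3 => //.
  by rewrite (inj_eq swinj).
- by move=> x y; rewrite hsw => /h4.
Qed.

Lemma upper_even n m : 3 <= n -> 3 <= m -> ~~ odd n ->
  total_colourable (KxK n m) ((n - 1) * (m - 1) + 1).
Proof.
move=> hn hm hev.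
have [F [HF1 HF2 HF3]] := fact1 (ltnW hn) hev.
have [L [HL1 HL2 HL3 HL4]] := fact2 hm.
case: n hn hev F HF1 HF2 HF3 => [|[|[|n2]]] // _ _ F HF1 HF2 HF3.
case: m hm L HL1 HL2 HL3 HL4 => [|[|[|m2]]] // _ L HL1 HL2 HL3 HL4.
have -> : (n2.+3 - 1) * (m2.+3 - 1) + 1 = m2.+3 + n2.+1 * m2.+2.
  rewrite !subn1 /= mulSn; lia.
exact: (consK HF1 HF2 HF3 HL1 HL2 HL3 HL4).
Qed.

Theorem theorem3 (n m : nat) (hn : 3 <= n) (hm : 3 <= m)
    (heven : ~~ odd n || ~~ odd m) :
  is_total_chromatic_number (KxK n m) ((n - 1) * (m - 1) + 1).
Proof.
split; last by move=> j; apply: lower; lia.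
case/orP: heven => h; first exact: upper_even.
apply: swapK; rewrite mulnC; exact: upper_even.
Qed.
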